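(* For every countable two-sorted ultrametric space $X$ there is a uniformly continuous dc-embedding $e\colon X\to\mathbb U$.
   Context: A two-sorted ultrametric space is $(X,d_X,D_X)$ with $D_X$ a linear order with least element $0$, $d_X\colon X\times X\to D_X$ symmetric, $d_X(x,y)=0\iff x=y$, $d_X(x,z)\le\max\{d_X(x,y),d_X(y,z)\}$; countable means both $X$ and $D_X$ are countable. A dc-embedding $f\colon X\to Y$ is an injection on points with an order embedding $D_f\colon D_X\to D_Y$ fixing $0$ such that $d_Y(f(x),f(x'))=D_f(d_X(x,x'))$. The uniformity of $X$ is generated by the partitions $\{B_r(a):a\in X\}$, $B_r(a)=\{x:d(x,a)<r\}$, $r\in D_X\setminus\{0\}$; uniform continuity is with respect to these uniformities. $\mathbb U$ is the countable rational Urysohn ultrametric space (the unique countable ultrametric space with distances in $\mathbb Q_{\ge0}$ that is universal for finite rational ultrametric spaces and in which every isometry between finite subsets extends to a global isometry), viewed as a two-sorted space with distance set $\mathbb Q_{\ge0}$; equivalently the Fraïssé limit of finite two-sorted ultrametric spaces with dc-embeddings. *)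

(* Defs.v *)
From HB Require Import structures.
From mathcomp Require Import all_boot all_order all_algebra.
From Stdlib Require List.
Import Order.TTheory GRing.Theory Num.Theory.

Set Implicit Arguments.
Unset Strict Implicit.
Unset Printing Implicit Defensive.

Definition ultrametric {disp : Order.disp_t} {X : Type} {D : orderType disp}
    (z : D) (dX : X -> X -> D) : Prop :=
  [/\ (forall r : D, (z <= r)%O),
      (forall x y, dX x y = dX y x),
      (forall x y, dX x y = z <-> x = y) &
      (forall x y w, (dX x w <= Order.max (dX x y) (dX y w))%O)].

Definition countable (T : Type) : Prop := exists f : T -> nat, injective f.

Definition dc_embedding {dispX dispY : Order.disp_t} {X Y : Type}
    {DX : orderType dispX} {DY : orderType dispY}
    (zX : DX) (dX : X -> X -> DX) (zY : DY) (dY : Y -> Y -> DY) (f : X -> Y) : Prop :=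
  injective f /\
  exists Df : DX -> DY,
    [/\ (forall a b, (Df a <= Df b)%O = (a <= b)%O),
        Df zX = zY &
        (forall x x', dY (f x) (f x') = Df (dX x x'))].

(* Entourages of the uniformity generated by the ball partitions
   {B_r(a) : a in X}, r in D \ {0}.  The entourage of the partition at
   radius r is {(x,y) | d x y < r}; the generated uniformity consists of
   the relations containing a finite intersection of these (the empty
   intersection being X x X). *)
Definition entourage {disp : Order.disp_t} {X : Type} {D : orderType disp}
    (z : D) (dX : X -> X -> D) (R : X -> X -> Prop) : Prop :=
  (forall x y, R x y) \/
  exists r : D, (z < r)%O /\ forall x y, (dX x y < r)%O -> R x y.

Definition uniformly_continuous {dispX dispY : Order.disp_t} {X Y : Type}
    {DX : orderType dispX} {DY : orderType dispY}
    (zX : DX) (dX : X -> X -> DX) (zY : DY) (dY : Y -> Y -> DY) (f : X -> Y) : Prop :=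
  forall R : Y -> Y -> Prop, entourage zY dY R ->
    entourage zX dX (fun x x' => R (f x) (f x')).

Record qnn := QNN { qval : rat; qval_ge0 : (0 <= qval)%R }.
HB.instance Definition _ := [isSub for qval].
HB.instance Definition _ := [Choice of qnn by <:].
HB.instance Definition _ :=
  [SubChoice_isSubOrder of qnn by <: with Order.Disp tt tt].

Definition q0 : qnn := @QNN 0%R (lexx (0%R : rat)).

(* Such a space exists and is unique up to
   isometry. *)
Definition rational_Urysohn (U : Type) (dU : U -> U -> qnn) : Prop :=
  [/\ ultrametric q0 dU,
      countable U,
      (forall (F : finType) (dF : F -> F -> qnn), ultrametric q0 dF ->
         exists g : F -> U, injective g /\ forall a b, dU (g a) (g b) = dF a b) &
      (forall (A : seq U) (h : U -> U),
         (forall a b, List.In a A -> List.In b A -> dU (h a) (h b) = dU a b) ->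
         exists g : U -> U,
           [/\ bijective g,
               (forall a b, dU (g a) (g b) = dU a b) &
               (forall a, List.In a A -> g a = h a)])].

(* Main.v *)
Require Import Defs.
From HB Require Import structures.
From mathcomp Require Import all_boot all_order all_algebra.
From mathcomp Require Import lra.
From Stdlib Require Import ClassicalEpsilon Classical.
Import Order.TTheory GRing.Theory Num.Theory.
Set Implicit Arguments.
Unset Strict Implicit.
Unset Printing Implicit Defensive.

Local Open Scope ring_scope.

Definition stepV {disp} {D : orderType disp} (p : nat -> D) (z : D) (m : nat)
  (v : nat -> rat) : rat :=
  if p m == z then 0 else
  Num.min ((foldr Num.max 0 [seq v j | j <- iota 0 m & (p j < p m)%O] +
            foldr Num.min (foldr Num.max 0 [seq v j | j <- iota 0 m & (p j < p m)%O] + 2)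
                  [seq v j | j <- iota 0 m & (p m < p j)%O]) / 2)
          (foldr Num.max 0 [seq v j | j <- iota 0 m & (p j < p m)%O] + (m.+1%:R)^-1).

Fixpoint Wv {disp} {D : orderType disp} (p : nat -> D) (z : D) (m : nat) : seq rat :=
  match m with
  | 0 => [::]
  | m'.+1 => rcons (Wv p z m') (stepV p z m' (fun j => nth 0 (Wv p z m') j))
  end.

Definition Vv {disp} {D : orderType disp} (p : nat -> D) (z : D) (k : nat) : rat :=
  nth 0 (Wv p z k.+1) k.

Lemma size_Wv {disp} {D : orderType disp} (p : nat -> D) (z : D) m : size (Wv p z m) = m.
Proof. by elim: m => //= m IH; rewrite size_rcons IH. Qed.

Lemma nth_Wv {disp} {D : orderType disp} (p : nat -> D) (z : D) m k :
  (k < m)%N -> nth 0 (Wv p z m) k = Vv p z k.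
Proof.
elim: m => // m IH; rewrite ltnS leq_eqVlt => /orP [/eqP ->|km] //.
by rewrite /= nth_rcons size_Wv km IH.
Qed.

Lemma stepV_ext {disp} {D : orderType disp} (p : nat -> D) (z : D) m v v' :
  (forall j, (j < m)%N -> v j = v' j) -> stepV p z m v = stepV p z m v'.
Proof.
move=> H; rewrite /stepV.
have E : forall P, [seq v j | j <- iota 0 m & P j] = [seq v' j | j <- iota 0 m & P j].
  move=> P; apply/eq_in_map => j; rewrite mem_filter mem_iota add0n => /andP [_ /andP [_ jm]].
  exact: H.
by rewrite !E.
Qed.

Lemma Vv_step {disp} {D : orderType disp} (p : nat -> D) (z : D) k :
  Vv p z k = stepV p z k (Vv p z).
Proof.
rewrite /Vv /= nth_rcons size_Wv ltnn eqxx.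
by apply: stepV_ext => j jk; rewrite nth_Wv.
Qed.

Lemma fmax_ge0 (s : seq rat) : 0 <= foldr Num.max 0 s.
Proof. by elim: s => //= x s IH; rewrite le_max IH orbT. Qed.

Lemma fmax_ub (s : seq rat) x : x \in s -> x <= foldr Num.max 0 s.
Proof.
elim: s => //= y s IH; rewrite in_cons => /orP [/eqP ->|xs]; rewrite le_max ?lexx //.
by rewrite IH ?orbT.
Qed.

Lemma fmax_lub (s : seq rat) b : 0 <= b -> (forall x, x \in s -> x <= b) ->
  foldr Num.max 0 s <= b.
Proof.
move=> b0; elim: s => //= y s IH H; rewrite ge_max H ?mem_head //= IH // => x xs.
by apply: H; rewrite in_cons xs orbT.
Qed.

Lemma fmax_lt (s : seq rat) b : 0 < b -> (forall x, x \in s -> x < b) ->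
  foldr Num.max 0 s < b.
Proof.
move=> b0; elim: s => //= y s IH H; rewrite gt_max H ?mem_head //= IH // => x xs.
by apply: H; rewrite in_cons xs orbT.
Qed.

Lemma fmin_lb (s : seq rat) a x : x \in s -> foldr Num.min a s <= x.
Proof.
elim: s => //= y s IH; rewrite in_cons => /orP [/eqP ->|xs]; rewrite ge_min ?lexx //.
by rewrite IH ?orbT.
Qed.

Lemma fmin_gt (s : seq rat) a b : b < a -> (forall x, x \in s -> b < x) ->
  b < foldr Num.min a s.
Proof.
move=> ba; elim: s => //= y s IH H; rewrite lt_min H ?mem_head //= IH // => x xs.
by apply: H; rewrite in_cons xs orbT.
Qed.

Lemma mem_seqV (v : nat -> rat) (P : pred nat) m j :
  (j < m)%N -> P j -> v j \in [seq v j | j <- iota 0 m & P j].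
Proof. by move=> jm Pj; apply: map_f; rewrite mem_filter Pj mem_iota add0n jm. Qed.

Lemma seqVP (v : nat -> rat) (P : pred nat) m x :
  x \in [seq v j | j <- iota 0 m & P j] -> exists j, [/\ (j < m)%N, P j & x = v j].
Proof.
move/mapP => [j]; rewrite mem_filter mem_iota add0n => /andP [Pj /andP [_ jm]] ->.
by exists j.
Qed.

Lemma minl (x y : rat) : Num.min x y <= x. Proof. by rewrite ge_min lexx. Qed.
Lemma minr (x y : rat) : Num.min x y <= y. Proof. by rewrite ge_min lexx orbT. Qed.

Lemma ar1 (lo hi e : rat) : lo < hi -> 0 < e ->
  lo < Num.min ((lo+hi)/2) (lo+e) /\ Num.min ((lo+hi)/2) (lo+e) < hi.
Proof.
move=> h1 h2; split.
 rewrite lt_min; apply/andP; split. lra. lra.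
have h : (lo+hi)/2 < hi by lra.
exact: le_lt_trans (minl _ _) h.
Qed.

Lemma ar2 (lo e : rat) (x : rat) : lo <= 0 -> x <= lo + e -> x <= e.
Proof. move=> *; lra. Qed.

Lemma Vv_z {disp} {D : orderType disp} (p : nat -> D) (z : D) k :
  p k = z -> Vv p z k = 0.
Proof. by move=> pk; rewrite Vv_step /stepV pk eqxx. Qed.

Lemma Vinv {disp} {D : orderType disp} (p : nat -> D) (z : D)
  (zmin : forall d, (z <= d)%O) m :
  (forall k1 k2, (k1 < m)%N -> (k2 < m)%N -> (p k1 < p k2)%O -> Vv p z k1 < Vv p z k2) /\
  (forall k, (k < m)%N -> p k != z -> 0 < Vv p z k).
Proof.
elim: m => [|m [IHm IHp]]; first by split.
have Vm := Vv_step p z m.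
have posm : p m != z -> 0 < Vv p z m /\
   (forall j, (j < m)%N -> (p j < p m)%O -> Vv p z j < Vv p z m) /\
   (forall j, (j < m)%N -> (p m < p j)%O -> Vv p z m < Vv p z j).
  move=> pmz; move: Vm; rewrite /stepV (negbTE pmz).
  set L := [seq _ | j <- _ & (p j < p m)%O].
  set H := [seq _ | j <- _ & (p m < p j)%O].
  set lo := foldr _ 0 L; set hi := foldr _ _ H => Vm.
  have lo0 : 0 <= lo by apply: fmax_ge0.
  have hL : forall j, (j < m)%N -> (p j < p m)%O -> Vv p z j <= lo.
    by move=> j jm pj; apply: fmax_ub; apply: mem_seqV.
  have hH : forall j, (j < m)%N -> (p m < p j)%O -> hi <= Vv p z j.
    by move=> j jm pj; apply: fmin_lb; apply: (@mem_seqV (Vv p z) (fun j => (p m < p j)%O)).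
  have lohi : lo < hi.
    apply: fmin_gt; first by rewrite ltrDl.
    move=> x /seqVP [j [jm pj ->]].
    apply: fmax_lt.
      apply: IHp => //; apply/eqP => pjz.
      by move: pj; rewrite pjz ltNge zmin.
    move=> y /seqVP [i [im pi ->]].
    by apply: IHm => //; apply: lt_trans pi pj.
  have inv0 : 0 < (m.+1%:R : rat)^-1 by rewrite invr_gt0 ltr0Sn.
  have [lov vhi] : lo < Vv p z m /\ Vv p z m < hi by rewrite Vm; apply: ar1.
  split; first by apply: le_lt_trans lo0 lov.
  split=> j jm pj; first by apply: le_lt_trans (hL j jm pj) lov.
  by apply: lt_le_trans vhi (hH j jm pj).
split.
  move=> k1 k2; rewrite ltnS leq_eqVlt => /orP [/eqP e1|k1m]; rewrite ltnS leq_eqVlt => /orP [/eqP e2|k2m] pk.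
  - by move: pk; rewrite e1 e2 ltxx.
  - subst k1; case pmz: (p m == z).
      rewrite (Vv_z (eqP pmz)); apply: IHp => //; apply/eqP => e.
      by move: pk; rewrite e (eqP pmz) ltxx.
    by have [_ [_ h]] := posm (negbT pmz); apply: h.
  - subst k2; case pmz: (p m == z).
      by move: pk; rewrite (eqP pmz) ltNge zmin.
    by have [_ [h _]] := posm (negbT pmz); apply: h.
  - exact: IHm.
move=> k; rewrite ltnS leq_eqVlt => /orP [/eqP ->|km] pkz.
  by have [] := posm pkz.
exact: IHp.
Qed.

Lemma Vge0 {disp} {D : orderType disp} (p : nat -> D) (z : D)
  (zmin : forall d, (z <= d)%O) k : 0 <= Vv p z k.
Proof.
case pkz: (p k == z); first by rewrite (Vv_z (eqP pkz)).
have [_ h] := Vinv p zmin k.+1.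
by apply: ltW; apply: h; rewrite ?ltnS ?pkz.
Qed.

Lemma Vv_rec {disp} {D : orderType disp} (p : nat -> D) (z : D) m :
  (forall j, (j < m)%N -> (p j < p m)%O -> Vv p z j <= 0) -> Vv p z m <= (m.+1%:R)^-1.
Proof.
move=> H; rewrite Vv_step /stepV.
have inv0 : 0 < (m.+1%:R : rat)^-1 by rewrite invr_gt0 ltr0Sn.
case: (p m == z); first exact: ltW.
apply: le_trans (minr _ _) _.
have : foldr Num.max 0 [seq Vv p z j | j <- iota 0 m & (p j < p m)%O] <= 0.
  by apply: fmax_lub => // x /seqVP [j [jm pj ->]]; apply: H.
by move/ar2; apply.
Qed.

Definition pt (T : Type) (t0 : T) (c : T -> nat) (j : nat) : T :=
  match excluded_middle_informative (exists d, c d = j) with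
  | left H => proj1_sig (constructive_indefinite_description _ H)
  | right _ => t0
  end.

Lemma pt_c (T : Type) (t0 : T) (c : T -> nat) : injective c -> forall d, pt t0 c (c d) = d.
Proof.
move=> cinj d; rewrite /pt; case: excluded_middle_informative => [H|H].
  by case: constructive_indefinite_description => /= a ha; apply: cinj.
by exfalso; apply: H; exists d.
Qed.

Lemma pt_cases (T : Type) (t0 : T) (c : T -> nat) j : pt t0 c j = t0 \/ c (pt t0 c j) = j.
Proof.
rewrite /pt; case: excluded_middle_informative => [H|H]; last by left.
by right; case: constructive_indefinite_description.
Qed.

Lemma minidx (T : Type) (c : T -> nat) (Q : T -> Prop) :
  (exists a, Q a) -> exists a, Q a /\ forall b, Q b -> (c a <= c b)%N.
Proof.
move=> [a0 Qa0].
have H : forall n, (forall a, Q a -> (n <= c a)%N) \/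
                   exists a, Q a /\ forall b, Q b -> (c a <= c b)%N.
  elim=> [|n [IH|IH]]; [by left | | by right].
  case: (classic (exists a, Q a /\ c a = n)) => [[a [Qa can]]|Hn].
    by right; exists a; split => // b Qb; rewrite can; apply: IH.
  left => a Qa; have := IH a Qa; rewrite leq_eqVlt => /orP [/eqP e|//].
  by exfalso; apply: Hn; exists a.
case: (H (c a0).+1) => // h; have := h a0 Qa0; by rewrite ltnn.
Qed.

Lemma min_rec {disp} {T : orderType disp} (z : T) (c : T -> nat)
  (zmin : forall d, (z <= d)%O) (Q : T -> Prop) b :
  (forall a, Q a -> (c b <= c a)%N) ->
  (forall a, (z < a)%O -> (a < b)%O -> Q a) ->
  forall j, (j < c b)%N -> (pt z c j < b)%O -> pt z c j = z.
Proof.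
move=> bmin HQ j jb pjb; case: (pt_cases z c j) => // cj.
case: (boolP (pt z c j == z)) => [/eqP //|nz].
have zp : (z < pt z c j)%O by rewrite lt_neqAle eq_sym nz zmin.
have := bmin _ (HQ _ zp pjb); rewrite cj => h.
by move: jb; rewrite ltnNge h.
Qed.

Lemma records {disp} {T : orderType disp} (z : T) (c : T -> nat)
  (cinj : injective c) (zmin : forall d, (z <= d)%O)
  (dense : forall s, (z < s)%O -> exists a, (z < a)%O /\ (a < s)%O)
  (s0 : T) (hs0 : (z < s0)%O) :
  forall N, exists s, [/\ (z < s)%O, (N <= c s)%N &
     forall j, (j < c s)%N -> (pt z c j < s)%O -> pt z c j = z].
Proof.
elim=> [|N [s [zs Ns recs]]].
  have [b [zb bmin]] := minidx c (ex_intro (fun a => (z < a)%O) s0 hs0).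
  exists b; split => //; apply: (min_rec zmin bmin) => a za _; exact: za.
have [a [za as_]] := dense s zs.
have [b [[zb bs] bmin]] := minidx c (ex_intro (fun a => (z < a)%O /\ (a < s)%O) a (conj za as_)).
exists b; split => //.
  case: (ltngtP (c b) (c s)) => [h|h|h].
  - have := recs _ h; rewrite pt_c // => /(_ bs) e.
    by move: zb; rewrite e ltxx.
  - by apply: leq_ltn_trans Ns h.
  - by move: bs; rewrite (cinj _ _ h) ltxx.
apply: (min_rec zmin bmin) => a' za' ab; split => //; exact: lt_trans ab bs.
Qed.

Lemma archi_inv (r : rat) : 0 < r -> exists N : nat, (N.+1%:R : rat)^-1 <= r.
Proof.
move=> r0; exists (Num.Def.archi_bound r^-1).
have r0' : 0 <= r^-1 by rewrite invr_ge0 ltW.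
have h := archi_boundP r0'.
rewrite -[r in _ <= r]invrK lef_pV2 ?posrE ?invr_gt0 ?ltr0Sn //.
apply: ltW; apply: lt_le_trans h _; by rewrite ler_nat.
Qed.

Local Close Scope ring_scope.

Lemma dep_choice (A : Type) (P : nat -> A -> Prop) (R : nat -> A -> A -> Prop) a0 :
  P 0 a0 -> (forall n a, P n a -> exists a', P n.+1 a' /\ R n a a') ->
  exists s : nat -> A, forall n, P n (s n) /\ R n (s n) (s n.+1).
Proof.
move=> H0 Hs.
pose stp := fun n (a : {a | P n a}) =>
  constructive_indefinite_description _ (Hs n _ (proj2_sig a)).
pose sq := fix sq n : {a | P n a} :=
  match n as n' return {a | P n' a} with
  | 0 => exist _ a0 H0
  | m.+1 => exist _ (proj1_sig (stp m (sq m))) (proj1 (proj2_sig (stp m (sq m))))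
  end.
exists (fun n => proj1_sig (sq n)) => n; split; first exact: (proj2_sig (sq n)).
exact: (proj2 (proj2_sig (stp n (sq n)))).
Qed.

Lemma q0_le (r : qnn) : (q0 <= r)%O.
Proof. exact: qval_ge0. Qed.

Definition eqU (U : Type) (a b : U) : bool :=
  if excluded_middle_informative (a = b) then true else false.

Lemma eqUP (U : Type) (a b : U) : eqU a b -> a = b.
Proof. by rewrite /eqU; case: excluded_middle_informative. Qed.

Lemma eqUrefl (U : Type) (a : U) : eqU a a.
Proof. by rewrite /eqU; case: excluded_middle_informative. Qed.

Lemma In_mapfilter (T1 T2 : Type) (g : T1 -> T2) (P : pred T1) s a :
  List.In a [seq g i | i <- s & P i] -> exists i, P i /\ a = g i.
Proof.
elim: s => //= x s IH; case Px: (P x) => /=; last exact: IH.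
by case=> [<-|/IH //]; exists x.
Qed.

Lemma In_mapfilter2 (T1 : eqType) (T2 : Type) (g : T1 -> T2) (P : pred T1) s i :
  i \in s -> P i -> List.In (g i) [seq g i | i <- s & P i].
Proof.
elim: s => //= x s IH; rewrite in_cons => /orP [/eqP <-|si] Pi.
  by rewrite Pi /=; left.
case: (P x) => /=; [right|]; exact: IH.
Qed.

Lemma embed (U : Type) (dU : U -> U -> qnn) (HU : rational_Urysohn dU)
  (X : Type) (del : X -> X -> qnn) (Hd : ultrametric q0 del)
  (f : X -> nat) (finj : injective f) :
  exists e : X -> U, forall x y, dU (e x) (e y) = del x y.
Proof.
case: HU => [HUu _ Huniv Hhom].
case: (classic (inhabited X)) => [[x0]|nX]; last first.
  by exists (fun x => match nX (inhabits x) with end) => x; case: (nX (inhabits x)).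
have [u0 _] : exists u0 : U, True.
  have hum : ultrametric q0 (fun _ _ : unit => q0).
    split => //; first exact: q0_le.
    - by move=> [] [].
  by have [g _] := Huniv unit _ hum; exists (g tt).
case: Hd => [dmin dsym dsep dtri].
pose p := pt x0 f.
have pf : forall x, p (f x) = x by move=> x; apply: pt_c.
pose P := fun n (E : nat -> U) => forall x y, (f x < n)%N -> (f y < n)%N ->
   dU (E (f x)) (E (f y)) = del x y.
pose R := fun n (E E' : nat -> U) => forall k, (k < n)%N -> E' k = E k.
have step : forall n E, P n E -> exists E', P n.+1 E' /\ R n E E'.
  move=> n E HE.
  case: (classic (exists xn, f xn = n)) => [[xn fxn]|nn]; last first.
    have lt : forall x, (f x < n.+1)%N -> (f x < n)%N.
      move=> x hx; rewrite ltn_neqAle -ltnS hx andbT; apply/eqP => e; apply: nn; by exists x.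
    by exists E; split=> // x y hx hy; apply: HE; apply: lt.
  pose F := {i : 'I_n.+1 | f (p i) == i}.
  pose dF := fun i j : F => del (p (val i)) (p (val j)).
  have hF : ultrametric q0 dF.
    split=> //.
    - by move=> i j; rewrite /dF dsym.
    - move=> i j; split; last by move=> ->; apply/dsep.
      move/dsep => e; apply: val_inj; apply: val_inj.
      by move: (eqP (valP i)) (eqP (valP j)) => /= <- <-; rewrite e.
    - by move=> i j w; apply: dtri.
  have [g [ginj giso]] := Huniv _ _ hF.
  pose ix := fun x (hx : (f x < n.+1)%N) =>
    (exist _ (Ordinal hx) (introT eqP (congr1 f (pf x))) : F).
  pose vi := fun i : F => nat_of_ord (val i).
  pose h := fun y => match [pick i : F | (vi i < n)%N && eqU (g i) y] with
                     | Some i => E (vi i) | None => y end.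
  have hg : forall i : F, (vi i < n)%N -> h (g i) = E (vi i).
    move=> i ilt; rewrite /h; case: pickP => [j /andP [_ gji]|]; first by rewrite (ginj _ _ (eqUP gji)).
    by move/(_ i); rewrite ilt eqUrefl.
  pose A := [seq g i | i : F <- enum {: F} & (vi i < n)%N].
  have hA : forall a b, List.In a A -> List.In b A -> dU (h a) (h b) = dU a b.
    move=> a b Ha Hb.
    have [i [ilt ->]] := In_mapfilter Ha.
    have [j [jlt ->]] := In_mapfilter Hb.
    rewrite (hg _ ilt) (hg _ jlt) giso /dF.
    have ei : f (p (vi i)) = vi i := eqP (valP i).
    have ej : f (p (vi j)) = vi j := eqP (valP j).
    by rewrite -{1}ei -{1}ej HE // ?ei ?ej.
  have [G [_ Giso Gh]] := Hhom A h hA.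
  have Hn : (f xn < n.+1)%N by rewrite fxn.
  pose E' := fun k => if (k < n)%N then E k else G (g (ix xn Hn)).
  have key : forall x (hx : (f x < n.+1)%N), E' (f x) = G (g (ix x hx)).
    move=> x hx; rewrite /E'; case: ifP => [lt|ge].
      rewrite Gh; first by rewrite hg.
      by apply: In_mapfilter2 => //; rewrite mem_enum.
    have e : x = xn.
      by apply: finj; move: hx ge; rewrite fxn ltnS leq_eqVlt => /orP [/eqP|->].
    subst x; congr (G (g _)); apply: val_inj; exact: val_inj.
  exists E'; split.
    move=> x y hx hy; rewrite (key x hx) (key y hy) Giso giso /dF /=.
    by rewrite !pf.
  by move=> k kn; rewrite /E' kn.
have P0 : P 0 (fun _ => u0) by move=> x y.
have [s Hs] := dep_choice P0 step.
have coh : forall n m, (n <= m)%N -> forall k, (k < n)%N -> s m k = s n k.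
  move=> n m nm k kn; elim: m nm => [|m IH].
    by rewrite leqn0 => /eqP ->.
  rewrite leq_eqVlt => /orP [/eqP -> //|]; rewrite ltnS => nm.
  by rewrite (proj2 (Hs m)) ?IH //; apply: leq_trans kn nm.
exists (fun x => s (f x).+1 (f x)) => x y /=.
have hx : (f x < (maxn (f x) (f y)).+1)%N by rewrite ltnS leq_maxl.
have hy : (f y < (maxn (f x) (f y)).+1)%N by rewrite ltnS leq_maxr.
rewrite -(coh _ _ hx (f x) (ltnSn _)) -(coh _ _ hy (f y) (ltnSn _)).
by apply: (proj1 (Hs _)); rewrite ltnS ?leq_maxl ?leq_maxr.
Qed.

Theorem proposition3p21 (U : Type) (dU : U -> U -> qnn) :
  rational_Urysohn dU ->
  forall (disp : Order.disp_t) (X : Type) (D : orderType disp)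
         (z : D) (dX : X -> X -> D),
    ultrametric z dX -> countable X -> countable D ->
    exists e : X -> U,
      dc_embedding z dX q0 dU e /\ uniformly_continuous z dX q0 dU e.
Proof.
move=> HU disp X D z dX [zmin dsym dsep dtri] [f finj] [c cinj].
pose p := pt z c.
have pc : forall d, p (c d) = d by move=> d; apply: pt_c.
pose Df := fun d => @QNN (Vv p z (c d)) (@Vge0 _ _ p z zmin (c d)).
have Dflt : forall a b, (a < b)%O -> (Df a < Df b)%O.
  move=> a b ab; have [h _] := Vinv p zmin (maxn (c a) (c b)).+1.
  by apply: h; rewrite ?ltnS ?leq_maxl ?leq_maxr // !pc.
have Dfle : forall a b, (Df a <= Df b)%O = (a <= b)%O by apply: le_mono.
have Dfz : Df z = q0 by apply: val_inj; rewrite /= Vv_z // pc.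
have Dfq0 : forall d, Df d = q0 -> d = z.
  move=> d e; apply: le_anti; rewrite zmin andbT -Dfle e -Dfz lexx //.
pose del := fun x y => Df (dX x y).
have Hdel : ultrametric q0 del.
  split.
  - exact: q0_le.
  - by move=> x y; rewrite /del dsym.
  - move=> x y; split; first by move/Dfq0/dsep.
    by move=> <-; change (Df (dX x x) = q0); rewrite (proj2 (dsep x x) erefl).
  - move=> x y w; rewrite /del le_max !Dfle -le_max; exact: dtri.
have [e He] := embed HU Hdel finj.
case: (HU) => [[_ _ dUsep _] _ _ _].
exists e; split.
  split.
    move=> x y exy; apply/dsep; apply: Dfq0.
    by rewrite -[Df _]He exy; apply/dUsep.
  by exists Df; split.
move=> R [Rall|[r [r0 Hr]]]; first by left => x y; apply: Rall.
have key : forall x y, (Df (dX x y) < r)%O -> R (e x) (e y).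
  by move=> x y h; apply: Hr; rewrite He.
have diag : forall x y, dX x y = z -> R (e x) (e y).
  by move=> x y h; apply: key; rewrite h Dfz.
case: (classic (exists s, (z < s)%O /\ forall a, (a < s)%O -> a = z)) => [[s [zs hs]]|nA].
  by right; exists s; split => // x y /hs; apply: diag.
case: (classic (exists s0, (z < s0)%O)) => [[s0 zs0]|nB]; last first.
  left => x y; apply: diag; case: (boolP (dX x y == z)) => [/eqP //|nz].
  by exfalso; apply: nB; exists (dX x y); rewrite lt_neqAle eq_sym nz zmin.
have dense : forall s, (z < s)%O -> exists a, (z < a)%O /\ (a < s)%O.
  move=> s zs; apply: NNPP => nd; apply: nA; exists s; split => // a a_s.
  case: (boolP (a == z)) => [/eqP //|nz]; exfalso; apply: nd; exists a.
  by rewrite lt_neqAle eq_sym nz zmin.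
have [N HN] := archi_inv r0.
have [s [zs Ns recs]] := records cinj zmin dense zs0 N.
right; exists s; split => // x y hxy; apply: key.
apply: lt_le_trans (Dflt _ _ hxy) _.
change (Vv p z (c s) <= qval r)%R.
apply: le_trans (Vv_rec _) _.
  move=> j js pj; rewrite Vv_z //; apply: recs => //; by rewrite pc in pj.
apply: le_trans HN; rewrite lef_pV2 ?posrE ?ltr0Sn // ler_nat; by [].
Qed.
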